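(* Under the unregularized objective (the regularized minimax objective induced by $\mathfrak R(h,a,\delta)=\mathcal R(h,a)$), the PuB-AMG subgame perfect equilibrium is not in general continuous: there exists a finite-horizon two-player zero-sum sequential game such that no subgame perfect equilibrium of its PuB-AMG, viewed as a map from public belief states to public decision rules, is continuous.
   Context: A finite-horizon two-player zero-sum sequential game consists of: players $i\in\{0,1\}$; a finite action set $\mathbb{A}$; a set of histories $\mathbb{H}$, at each of which exactly one player $\iota$ acts; each history $h$ determines each player's action-observation history (AOH) $h_i$ (perfect recall) and a public history $h_{\text{pub}}$ (sequence of common-knowledge public observations); an initial history distribution $\mu$; a reward $\mathcal{R}:\mathbb{H}\times\mathbb{A}\to\mathbb{R}$ (player 0 gets $\mathcal R$, player 1 gets $-\mathcal R$); a transition function $\mathcal{T}:\mathbb{H}\times\mathbb{A}\to\Delta(\mathbb{H})$; a horizon $T$. $\mathbb{H}(h_{\text{pub}})$, $\mathbb{H}_i(h_{\text{pub}})$ denote histories/AOHs consistent with $h_{\text{pub}}$; $h_\iota$ is the acting player's AOH at $h$. The PuB-AMG of the game: states (public belief states, PBSs) are $\tilde s\in\Delta(\mathbb{H}(h_{\text{pub}}))$ for public histories $h_{\text{pub}}$; at $\tilde s$ the acting player chooses a public decision rule $\tilde a:\mathbb{H}_\iota(h_{\text{pub}})\to\Delta(\mathbb{A})$; the next PBS arises by sampling $H\sim\tilde s$, $A\sim\tilde a(H_\iota)$, a next history from $\mathcal T(H,A)$, observing its public observation $o$, and taking the posterior over next histories given $\tilde s,\tilde a,o$. Under the unregularized objective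 the stage reward is $\tilde{\mathcal R}(\tilde s,\tilde a)=\mathbb{E}_{H\sim\tilde s}\mathbb{E}_{A\sim\tilde a(H_\iota)}\mathcal R(H,A)$; player 0 maximizes and player 1 minimizes the expected sum of stage rewards. A PuB-AMG policy maps PBSs to decision rules, and a subgame perfect equilibrium is a joint PuB-AMG policy whose restriction to the PuB-AMG started from any PBS is an equilibrium (saddle point) there. *)

(* Defs.v *)
From HB Require Import structures.
From mathcomp Require Import all_boot all_order all_algebra.
From mathcomp Require Import reals.
Import Order.TTheory GRing.Theory Num.Theory.
Local Open Scope ring_scope.

(* Player [false] = player 0 (maximizer), player [true] = player 1.
   [aoh i h]  : action-observation history of player i at history h.
   [pub h]    : public history at h.
   [time h]   : time step of h; the game stops at time [horizon].
   [trans h a h'] : probability of next history h' after action a at h. *)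
Record game (R : realType) : Type := Game {
  hist : finType;
  action : finType;
  aohT : finType;
  pubT : finType;
  player : hist -> bool;
  aoh : bool -> hist -> aohT;
  pub : hist -> pubT;
  time : hist -> nat;
  init : hist -> R;
  reward : hist -> action -> R;
  trans : hist -> action -> hist -> R;
  horizon : nat }.
Arguments hist {R} _.
Arguments action {R} _.
Arguments aohT {R} _.
Arguments pubT {R} _.
Arguments player {R} _.
Arguments aoh {R} _.
Arguments pub {R} _.
Arguments time {R} _.
Arguments init {R} _.
Arguments reward {R} _.
Arguments trans {R} _.
Arguments horizon {R} _.

Set Implicit Arguments. Unset Strict Implicit. Unset Printing Implicit Defensive.

Definition is_dist (R : realType) (T : finType) (f : T -> R) : Prop :=
  (forall x, 0 <= f x) /\ \sum_(x : T) f x = 1.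

Definition wf_game (R : realType) (G : game R) : Prop :=
  is_dist (init G) /\ (forall h, init G h != 0 -> time G h = 0%N) /\
  (forall h a, (time G h < horizon G)%N ->
     is_dist (trans G h a) /\
     forall h', trans G h a h' != 0 -> time G h' = (time G h).+1) /\
  (* perfect recall: a player's AOH determines its previous AOH and its own action *)
  (forall i h a h' g b g',
     (time G h < horizon G)%N -> (time G g < horizon G)%N ->
     trans G h a h' != 0 -> trans G g b g' != 0 ->
     aoh G i h' = aoh G i g' ->
     aoh G i h = aoh G i g /\ (player G h = i -> a = b)) /\
  (* public history extends the previous public history *)
  (forall h a h' g b g',
     (time G h < horizon G)%N -> (time G g < horizon G)%N ->
     trans G h a h' != 0 -> trans G g b g' != 0 ->
     pub G h' = pub G g' -> pub G h = pub G g) /\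
  (* public history is common knowledge *)
  (forall i h g, aoh G i h = aoh G i g -> pub G h = pub G g) /\
  (forall h g, pub G h = pub G g -> player G h = player G g /\ time G h = time G g).

Definition is_pbs (R : realType) (G : game R) (p : pubT G) (b : hist G -> R) : Prop :=
  is_dist b /\ forall h, b h != 0 -> pub G h = p.

Definition decrule (R : realType) (G : game R) := aohT G -> action G -> R.
Definition policy (R : realType) (G : game R) := (hist G -> R) -> decrule G.

Section PuBAMG.
Variables (R : realType) (G : game R).

Definition stage_reward (b : hist G -> R) (d : decrule G) : R :=
  \sum_(h : hist G) \sum_(a : action G)
     b h * d (aoh G (player G h) h) a * reward G h a.

Definition next_dist (b : hist G -> R) (d : decrule G) (h' : hist G) : R :=
  \sum_(h : hist G) \sum_(a : action G)
     b h * d (aoh G (player G h) h) a * trans G h a h'.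

Definition obs_prob (b : hist G -> R) (d : decrule G) (p' : pubT G) : R :=
  \sum_(h' : hist G | pub G h' == p') next_dist b d h'.

Definition posterior (b : hist G -> R) (d : decrule G) (p' : pubT G) : hist G -> R :=
  fun h' => if pub G h' == p' then next_dist b d h' / obs_prob b d p' else 0.

Fixpoint value (pi : policy G) (n : nat) (b : hist G -> R) : R :=
  match n with
  | 0%N => 0
  | n'.+1 => stage_reward b (pi b) +
      \sum_(p' : pubT G) obs_prob b (pi b) p' * value pi n' (posterior b (pi b) p')
  end.

Definition valid_policy (pi : policy G) : Prop :=
  forall p b, is_pbs p b -> forall h, pub G h = p ->
    is_dist (pi b (aoh G (player G h) h)).

Definition deviation (i : bool) (pi pi' : policy G) : Prop :=
  valid_policy pi' /\
  forall p b, is_pbs p b -> (forall h, pub G h = p -> player G h != i) -> pi' b = pi b.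

Definition SPE (pi : policy G) : Prop :=
  valid_policy pi /\
  forall p b, is_pbs p b -> forall h, pub G h = p ->
    (forall pi', deviation false pi pi' ->
       value pi' (horizon G - time G h) b <= value pi (horizon G - time G h) b) /\
    (forall pi', deviation true pi pi' ->
       value pi (horizon G - time G h) b <= value pi' (horizon G - time G h) b).

(* continuity of the policy as a map from PBSs (points of the simplex over
   H(h_pub), sup-metric) to public decision rules (restricted to the AOHs of
   the acting player consistent with h_pub) *)
Definition continuous_policy (pi : policy G) : Prop :=
  forall p h0 a, pub G h0 = p ->
  forall b, is_pbs p b -> forall e : R, 0 < e -> exists d : R, 0 < d /\
    forall b', is_pbs p b' -> (forall h, `|b' h - b h| < d) ->
      `|pi b' (aoh G (player G h0) h0) a - pi b (aoh G (player G h0) h0) a| < e.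

End PuBAMG.

(* Main.v *)
Require Import Defs.
From HB Require Import structures.
From mathcomp Require Import all_boot all_order all_algebra.
From mathcomp Require Import reals.
From mathcomp Require Import ring lra.
Import Order.TTheory GRing.Theory Num.Theory.
Local Open Scope ring_scope.

Section Ex.
Variable R : realType.

Definition Ginit (h : bool * bool) : R := if h.1 then 0 else 1/2.
Definition Greward (h : bool * bool) (a : bool) : R :=
  if h.1 then 0 else (a == h.2)%:R.
Definition Gtrans (h : bool * bool) (a : bool) (h' : bool * bool) : R :=
  (h' == (true, a))%:R.

Definition G0 : game R :=
  @Game R (bool * bool)%type bool (option bool) bool (fun _ => false)
    (fun _ h => if h.1 then Some h.2 else None) (fun h => h.1)
    (fun h => if h.1 then 1%N else 0%N) Ginit Greward Gtrans 1%N.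

Lemma sumbb (F : bool * bool -> R) :
  \sum_(h : bool * bool) F h = F (true,true) + F (true,false) + (F (false,true) + F (false,false)).
Proof.
transitivity (\sum_(p : bool * bool | xpredT p.1 && xpredT p.2) F (p.1, p.2)).
  by apply: eq_bigr => -[].
by rewrite -(pair_big xpredT xpredT (fun i j => F (i, j))) /= !big_bool /=.
Qed.

Lemma stageE (b : hist G0 -> R) (d : decrule G0) :
  stage_reward b d = b (false,true) * d None true + b (false,false) * d None false.
Proof.
rewrite /stage_reward sumbb !big_bool /= /Greward /=.
rewrite !mulr0 !mulr1 !addr0 !add0r //.
Qed.


Lemma sumb (F : bool -> R) : \sum_(a : bool) F a = F true + F false.
Proof. by rewrite big_bool. Qed.

Lemma wfG0 : wf_game G0.
Proof.
split.
  split; first by case=> -[] [] /=; rewrite /Ginit /=; lra.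
  by rewrite sumbb /= /Ginit /=; lra.
split; first by case=> -[] [] //=; rewrite /= /Ginit /= eqxx.
split.
  case=> -[] x a //= _; split.
    split; first by move=> h'; rewrite /Gtrans ler0n.
    rewrite sumbb /= /Gtrans /=; case: a => /=; lra.
  by case=> -[] y; rewrite /Gtrans /= ?xpair_eqE //= ?eqxx.
split.
  move=> i [[] x] a [[] y] [[] z] b [[] w] //= _ _;
    rewrite /Gtrans /= ?xpair_eqE /= ?eqxx //=.
  case: (y =P a) => [-> _|]; last by rewrite eqxx.
  case: (w =P b) => [-> _|]; last by rewrite eqxx.
  by case=> ->.
split.
  by move=> [[] x] a [[] y] [[] z] b [[] w].
split.
  by move=> i [[] x] [[] y].
by move=> [[] x] [[] y].
Qed.

Definition dl (c : bool) : decrule G0 := fun _ a => (a == c)%:R.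
Definition pi0 : policy G0 :=
  fun b => if b (false,false) <= b (false,true) then dl true else dl false.

Lemma dist_dl c o : is_dist (dl c o).
Proof.
split; first by move=> a; rewrite /dl ler0n.
by rewrite sumb /dl; case: c => /=; lra.
Qed.

Lemma value1 (pi : policy G0) b : value pi 1 b = stage_reward b (pi b).
Proof. by rewrite /= big1 ?addr0 // => p _; rewrite mulr0. Qed.

Lemma no_nonactive p b : is_pbs p b ->
  (forall h, pub G0 h = p -> player G0 h != false) -> False.
Proof.
move=> [[_ Hs] Hsupp] Hn.
have [h Hh] : exists h, b h != 0.
  apply/existsP/negP => /existsP Hall.
  move: Hs; rewrite big1; first by move/eqP; rewrite eq_sym oner_eq0.
  by move=> h _; apply/eqP/negbNE/negP => Hh; apply: Hall; exists h.
by have := Hn h (Hsupp h Hh).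
Qed.

Lemma SPE_pi0 : SPE pi0.
Proof.
split.
  by move=> p b _ h _; rewrite /pi0; case: ifP => _; apply: dist_dl.
move=> p b Hb [[] x] Hp.
  by rewrite /=; split => pi' _; rewrite lexx.
change (horizon G0 - time G0 (false, x))%N with 1%N; split => pi' [Hv Heq].
  rewrite !value1 !stageE.
  have [Hq Hs] := Hv p b Hb (false, x) Hp.
  rewrite sumb /= in Hs.
  have Hq1 := Hq true; have Hq2 := Hq false.
  move: Hs Hq1 Hq2; rewrite /=.
  have [_ Hsupp] := Hb.
  set qT := pi' b None true; set qF := pi' b None false.
  rewrite /pi0; case: ifP => Hle; rewrite /dl /= mulr1 mulr0 ?addr0 ?add0r.
    move=> *; nra.
  move: Hle => /negbT; rewrite -ltNge => *; nra.
by rewrite !value1 (Heq p b Hb).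
Qed.

Lemma opt (pi : policy G0) (c : bool) (b : hist G0 -> R) : SPE pi ->
  is_pbs (false : pubT G0) b -> b (false, ~~ c) < b (false, c) ->
  pi b None c = 1 /\ pi b None (~~ c) = 0.
Proof.
move=> [Hv Hs] Hb Hlt.
have [Hdev _] := Hs false b Hb (false, c) erefl.
have Hd : deviation false pi (fun _ => dl c).
  split; first by move=> p b' _ h _; apply: dist_dl.
  by move=> p b' Hb' Hn; case: (no_nonactive p b' Hb' Hn).
have := Hdev _ Hd.
change (horizon G0 - time G0 (false, c))%N with 1%N.
rewrite !value1 !stageE /dl.
have [Hq Hsum] := Hv false b Hb (false, c) erefl.
rewrite sumb /= in Hsum.
have Hq1 := Hq true; have Hq2 := Hq false.
move: Hsum Hq1 Hq2 Hlt; rewrite /=; clear Hdev Hd Hq.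
case: c => /=; rewrite ?mulr1 ?mulr0 ?addr0 ?add0r => Hsum Hq1 Hq2 Hlt Hle.
  split; nra.
split; nra.
Qed.

Definition be (e : R) : hist G0 -> R :=
  fun h => if h.1 then 0 else if h.2 then 1/2 + e else 1/2 - e.

Lemma pbs_be e : -(1/2) <= e <= 1/2 -> is_pbs (false : pubT G0) (be e).
Proof.
move=> /andP [H1 H2]; split.
  split; first by case=> -[] [] /=; rewrite /be /=; lra.
  by rewrite sumbb /be /=; lra.
by case=> -[] x //=; rewrite /be /= eqxx.
Qed.

End Ex.

Theorem propositionB8 : forall R : realType, exists G : game R,
  wf_game G /\ (exists pi : policy G, SPE pi) /\
  forall pi : policy G, SPE pi -> ~ continuous_policy pi.
Proof.
move=> R; exists (G0 R); split; first exact: wfG0.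
split; first by exists (pi0 R); apply: SPE_pi0.
move=> pi Hpi Hc.
have Hb0 : is_pbs (G:=G0 R) (false : pubT (G0 R)) (be R 0) by apply: (@pbs_be R); lra.
have [d [d0 Hd]] := Hc (false : pubT (G0 R)) (false, true) true erefl (be R 0) Hb0 (1/2) ltac:(lra).
have [e [He1 [He2 He3]]] : exists e : R, 0 < e /\ e < d /\ e <= 1/4.
  by case: (lerP d 1) => Hd1; [exists (d/4) | exists (1/4)]; lra.
have Hbp : is_pbs (G:=G0 R) (false : pubT (G0 R)) (be R e) by apply: (@pbs_be R); lra.
have Hbm : is_pbs (G:=G0 R) (false : pubT (G0 R)) (be R (- e)) by apply: (@pbs_be R); lra.
have Hclose : forall s : R, `|s| < d -> forall h, `|be R s h - be R 0 h| < d.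
  move=> s Hs [[] []]; rewrite /be /= /=.
  - by rewrite subrr normr0.
  - by rewrite subrr normr0.
  - have -> : 1 / 2 + s - (1 / 2 + 0) = s by ring.
    done.
  - have -> : 1 / 2 - s - (1 / 2 - 0) = - s by ring.
    by rewrite normrN.
have Hp := Hd (be R e) Hbp (Hclose e ltac:(rewrite ger0_norm; lra)).
have Hm := Hd (be R (-e)) Hbm (Hclose (-e) ltac:(rewrite normrN ger0_norm; lra)).
have [Op _] := @opt R pi true _ Hpi Hbp ltac:(rewrite /be /= /=; lra).
have [_ Om] := @opt R pi false _ Hpi Hbm ltac:(rewrite /be /= /=; lra).
move: Hp Hm; rewrite /= Op Om !ltr_norml => /andP [? ?] /andP [? ?].
lra.
Qed.
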